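(* Let $k\ge 1$, $0\le r<k$ and $n\ge 1$ be integers, and let $$B_n(k,r,x)=\left(\binom{i-k+1+r}{i-j}x^k+\binom{i+1+r}{i-j+1}\right)_{i,j=0}^{n-1}.$$ Then $x^r\det B_n(k,r,x)=F^{(k)}_{kn+r}(x)$.
   Context: Binomial coefficients are the generalized ones: for an integer $m$ (possibly negative) and an integer $j$, $\binom{m}{j}=\frac{m(m-1)\cdots(m-j+1)}{j!}$ if $j\ge 0$ and $\binom{m}{j}=0$ if $j<0$. For an integer $k\ge1$, the generalized Fibonacci polynomials $F^{(k)}_n(x)\in\mathbb{Z}[x]$ ($n\ge0$) are defined by $F^{(k)}_n(x)=x^n$ for $0\le n<k$ and $F^{(k)}_n(x)=xF^{(k)}_{n-1}(x)+F^{(k)}_{n-k}(x)$ for $n\ge k$. *)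

(* Defs.v *)
From HB Require Import structures.
From mathcomp Require Import all_boot all_order all_algebra.
Set Implicit Arguments. Unset Strict Implicit. Unset Printing Implicit Defensive.
Import Order.TTheory GRing.Theory Num.Theory.
Local Open Scope ring_scope.

(* Generalized binomial coefficient binom(m, j) for integers m (possibly
   negative) and j: m(m-1)...(m-j+1)/j! if j >= 0 and 0 if j < 0.
   The division is exact (in int). *)
Definition gbin (m j : int) : int :=
  match j with
  | Posz j' => ((\prod_(l < j') (m - (nat_of_ord l)%:Z)) %/ (j'`!)%:Z)%Z
  | Negz _ => 0
  end.

(* Generalized Fibonacci polynomials F^{(k)}_n(x) in Z[x]:
   F_n = x^n for 0 <= n < k, F_n = x F_{n-1} + F_{n-k} for n >= k.
   Implemented with fuel; fuel n.+1 suffices when k >= 1. *)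
Fixpoint Fib_aux (k fuel n : nat) : {poly int} :=
  match fuel with
  | 0%N => 0
  | f.+1 => if (n < k)%N then 'X^n
            else 'X * Fib_aux k f n.-1 + Fib_aux k f (n - k)
  end.

Definition Fib (k n : nat) : {poly int} := Fib_aux k n.+1 n.

Definition Bmat (k r n : nat) : 'M[{poly int}]_n :=
  \matrix_(i < n, j < n)
    ((gbin (i%:Z - k%:Z + 1 + r%:Z) (i%:Z - j%:Z))%:P * 'X^k
     + (gbin (i%:Z + 1 + r%:Z) (i%:Z - j%:Z + 1))%:P).

(* Main.v *)
Require Import Defs.
From HB Require Import structures.
From mathcomp Require Import all_boot all_order all_algebra.
From mathcomp Require Import zify ring lra.
Import GRing.Theory Num.Theory.
Local Open Scope ring_scope.

Definition gb (m : int) (j : nat) : int :=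
  match m with
  | Posz a => ('C(a, j))%:Z
  | Negz b => (-1) ^+ j * ('C(b + j, j))%:Z
  end.

Lemma gb_step m j : gb m j.+1 * j.+1%:Z = gb m j * (m - j%:Z).
Proof.
case: m => [a|b] /=.
  have [lt|le] := ltnP a j.
    by rewrite !bin_small ?mul0r // ltnW.
  rewrite -!PoszM mulnC mul_bin_left mulnC PoszM; congr (_ * _).
  by rewrite subzn.
rewrite NegzE.
have h := mul_bin_diag (b + j).+1 j; rewrite /= in h.
have e : ('C(b + j.+1, j.+1))%:Z * j.+1%:Z = ('C(b + j, j))%:Z * (b + j).+1%:Z.
  by rewrite -!PoszM addnS mulnC -h mulnC.
rewrite exprS.
transitivity (- (-1) ^+ j * (('C(b + j.+1, j.+1))%:Z * j.+1%:Z)); first by ring.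
rewrite e.
have -> : (b + j).+1%:Z = b%:Z + j%:Z + 1 by rewrite -addn1 !PoszD.
have -> : (b.+1%:Z) = b%:Z + 1 by rewrite -addn1 PoszD.
ring.
Qed.

Lemma prod_gb (m : int) (j : nat) :
  \prod_(l < j) (m - (nat_of_ord l)%:Z) = gb m j * (j`!)%:Z.
Proof.
elim: j => [|j IH].
  by rewrite big_ord0 fact0 mulr1; case: m => [a|b] //=; rewrite bin0 ?expr0 ?mul1r.
rewrite big_ord_recr /= IH factS PoszM.
transitivity (gb m j.+1 * j.+1%:Z * (j`!)%:Z); last by ring.
by rewrite gb_step; ring.
Qed.

Lemma gbinE (m : int) (j : nat) : gbin m j = gb m j.
Proof.
rewrite /gbin prod_gb mulzK //.
by rewrite eqz_nat -lt0n fact_gt0.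
Qed.

Lemma gbin_neg (m : int) (j : int) : j < 0 -> gbin m j = 0.
Proof. by case: j. Qed.

Lemma gbin0 (m : int) : gbin m 0 = 1.
Proof. by rewrite gbinE; case: m => [a|b] /=; rewrite ?bin0 ?expr0 ?mul1r. Qed.

Lemma gb_pascal m j : gb (m + 1) j.+1 = gb m j.+1 + gb m j.
Proof.
case: m => [a|[|b]].
- have -> : Posz a + 1 = Posz a.+1 by rewrite -addn1 PoszD.
  by rewrite /= binS PoszD.
- have -> : Negz 0 + 1 = Posz 0 by [].
  rewrite /= add0n bin0n /= !binn exprS; ring.
- have -> : Negz b.+1 + 1 = Negz b.
    by rewrite !NegzE -[b.+2]addn1 PoszD opprD addrNK.
  rewrite /= exprS addSn [in X in _ = X]addnS binS PoszD -addSnnS addSn; ring.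
Qed.

Lemma gbin_pascal (m p : int) : gbin (m + 1) p = gbin m p + gbin m (p - 1).
Proof.
case: p => [[|j]|j].
- by rewrite !gbin0 (@gbin_neg m (0 - 1)) ?addr0.
- have -> : Posz j.+1 - 1 = Posz j by rewrite -addn1 PoszD addrK.
  by rewrite !gbinE gb_pascal.
- by rewrite !gbin_neg // NegzE; lia.
Qed.

Lemma int_ind2 (P : int -> Prop) :
  P 0 -> (forall c, P c -> P (c + 1)) -> (forall c, P (c + 1) -> P c) ->
  forall c, P c.
Proof.
move=> P0 Pu Pd; case=> [n|n].
  elim: n => // n IH; have := Pu _ IH; by rewrite -addn1 PoszD.
elim: n => [|n IH].
  by apply: Pd.
apply: Pd; have -> : Negz n.+1 + 1 = Negz n by rewrite !NegzE; lia.
exact: IH.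
Qed.

Lemma gbin0l (p : int) : gbin 0 p = (p == 0)%:Z.
Proof. by case: p => [j|j] //; rewrite gbinE /= bin0n. Qed.

Definition Sv (c d : int) (l N : nat) (T : int) :=
  \sum_(j < N) gbin c (T - (nat_of_ord j)%:Z) * gbin d ((nat_of_ord j)%:Z - l%:Z).

Lemma Sv_neg c d l N T : T < 0 -> Sv c d l N T = 0.
Proof.
move=> hT; rewrite /Sv big1 // => j _; rewrite gbin_neg ?mul0r //; lia.
Qed.

Lemma Sv_pascal c d l N T : Sv (c + 1) d l N T = Sv c d l N T + Sv c d l N (T - 1).
Proof.
rewrite /Sv -big_split; apply: eq_bigr => j _ /=.
by rewrite gbin_pascal mulrDl addrAC.
Qed.

Lemma vdm_Sv (c d : int) (l N : nat) (T : int) :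
  T < N%:Z -> Sv c d l N T = gbin (c + d) (T - l%:Z).
Proof.
move: T; elim/int_ind2: c.
- move=> T hT; rewrite add0r.
  case: T hT => [t|t] ht; last first.
    by rewrite Sv_neg // gbin_neg //; lia.
  have tN : (t < N)%N by lia.
  rewrite /Sv (bigD1 (Ordinal tN)) //= gbin0l subrr eqxx mul1r big1 ?addr0 //.
  move=> j hj; rewrite gbin0l.
  have : (t%:Z - (nat_of_ord j)%:Z == 0) = false.
    apply/negbTE; move: hj; rewrite -val_eqE /=; lia.
  by move=> ->; rewrite mul0r.
- move=> c IH T hT; rewrite Sv_pascal !IH //; last by lia.
  rewrite (_ : c + 1 + d = c + d + 1); last ring.
  rewrite gbin_pascal; congr (_ + _); congr gbin; ring.
- move=> c IH T hT.
  case: T hT => [t|t] ht; last first.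
    by rewrite Sv_neg // gbin_neg //; lia.
  elim: t ht => [|t IHt] ht.
    have := Sv_pascal c d l N 0; rewrite IH // (@Sv_neg _ _ _ _ (0 - 1)) // addr0.
    move=> <-; rewrite (_ : c + 1 + d = c + d + 1); last ring.
  rewrite gbin_pascal.
    by rewrite (@gbin_neg _ (0 - l%:Z - 1)) ?addr0 //; lia.
  have := Sv_pascal c d l N t.+1; rewrite IH //.
  have e : Posz t.+1 - 1 = Posz t by rewrite -addn1 PoszD addrK.
  rewrite e IHt; last by lia.
  move=> h; apply: (addIr (gbin (c + d) (t%:Z - l%:Z))); rewrite -h.
  rewrite (_ : c + 1 + d = c + d + 1); last ring.
  rewrite gbin_pascal; congr (_ + _); congr gbin.
  rewrite -e; ring.
Qed.


Section Hess.
Variable R : comNzRingType.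
Variable a : nat -> nat -> R.
Hypothesis H0 : forall i j, (i.+1 < j)%N -> a i j = 0.
Hypothesis H1 : forall i, a i i.+1 = 1.

Definition Mf n : 'M[R]_n := \matrix_(i < n, j < n) a i j.
Definition Mb n (b : nat -> R) : 'M[R]_n.+1 :=
  \matrix_(i < n.+1, j < n.+1) if (nat_of_ord i == n)%N then b j else a i j.

Lemma sign_even (m : nat) : (-1) ^+ (m + m) = 1 :> R.
Proof. by rewrite -signr_odd addnn odd_double. Qed.

Lemma MbE n b i j : Mb n b i j = if (nat_of_ord i == n)%N then b j else a i j.
Proof. by rewrite mxE. Qed.

Lemma MfE n i j : Mf n i j = a i j.
Proof. by rewrite mxE. Qed.

Lemma hess_b n b :
  \det (Mb n b) = \sum_(j < n.+1) (-1) ^+ (n - j) * b j * \det (Mf j).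
Proof.
elim: n b => [|n IH] b.
  rewrite (expand_det_col _ ord0) !big_ord1 /cofactor det_mx00 !mxE /=.
  by rewrite /Mf det_mx00 !mulr1 expr0 mul1r.
rewrite (expand_det_col _ ord_max) big_ord_recr big_ord_recr /=.
rewrite big1 ?add0r; last first.
  move=> i _; rewrite MbE /=.
  have -> : (i == n.+1 :> nat) = false by apply/negbTE; move: (ltn_ord i); lia.
  rewrite H0 ?mul0r //=; exact: ltn_ord.
rewrite !MbE /= eqxx.
have -> : (n == n.+1)%N = false by lia.
rewrite H1 mul1r.
rewrite /cofactor.
have -> : row' ord_max (col' ord_max (Mb n.+1 b)) = Mf n.+1.
  apply/matrixP => u v; rewrite !mxE !lift_max.
  by rewrite ifN // neq_ltn ltn_ord.
have -> : row' (widen_ord (leqnSn n.+1) ord_max) (col' ord_max (Mb n.+1 b)) = Mb n b.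
  apply/matrixP => u v; rewrite !mxE !lift_max /= /bump.
  case: u => u hu /=; case: (ltngtP u n) => h.
  - by rewrite add0n ifN //; lia.
  - by move: hu; rewrite /=; lia.
  - by rewrite ifT //; lia.
rewrite IH [RHS]big_ord_recr /= subnn expr0 mul1r addnS exprS !sign_even mulr1 mul1r.
rewrite mulN1r -sumrN; congr (_ + _); apply: eq_bigr => j _ /=.
by rewrite subSn 1?exprS ?mulN1r ?mulNr //; rewrite -ltnS.
Qed.

Lemma hess n : \det (Mf n.+1) = \sum_(j < n.+1) (-1) ^+ (n - j) * a n j * \det (Mf j).
Proof.
rewrite -hess_b; congr (\det _); apply/matrixP => i j; rewrite !mxE.
by case: eqP => // ->.
Qed.
End Hess.


Lemma sgnE {R : pzRingType} (a j l : nat) :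
  (-1) ^+ (a + j) * (-1) ^+ (j + l) = (-1) ^+ (a + l) :> R.
Proof.
rewrite -exprD -[LHS]signr_odd -[RHS]signr_odd !oddD.
by case: (odd a); case: (odd j); case: (odd l).
Qed.

Section Main.
Variables k r : nat.

Definition aB (i j : nat) : {poly int} :=
  (gbin (i%:Z - k%:Z + 1 + r%:Z) (i%:Z - j%:Z))%:P * 'X^k
     + (gbin (i%:Z + 1 + r%:Z) (i%:Z - j%:Z + 1))%:P.

Lemma Bmat_Mf n : Bmat k r n = @Mf _ aB n.
Proof. by []. Qed.

Lemma aB0 i j : (i.+1 < j)%N -> aB i j = 0.
Proof.
move=> h; rewrite /aB !gbin_neg ?mul0r ?add0r //; lia.
Qed.

Lemma aB1 i : aB i i.+1 = 1.
Proof.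
rewrite /aB gbin_neg ?mul0r ?add0r; last lia.
have -> : i%:Z - i.+1%:Z + 1 = 0 by lia.
by rewrite gbin0.
Qed.

Definition dd (l : nat) : int := - (r%:Z + 1 + (k * l)%:Z).

Definition D (j : nat) : {poly int} :=
  \sum_(l < j.+1) (-1) ^+ (j + l) * 'X^(k * l) * (gbin (dd l) (j%:Z - l%:Z))%:P.

Lemma D_widen j N : (j < N)%N ->
  D j = \sum_(l < N) (-1) ^+ (j + l) * 'X^(k * l) * (gbin (dd l) (j%:Z - l%:Z))%:P.
Proof.
move=> jN; rewrite /D (big_ord_widen N (fun l => (-1) ^+ (j + l) * 'X^(k * l) * (gbin (dd l) (j%:Z - l%:Z))%:P)) //.
rewrite big_mkcond; apply: eq_bigr => l _; case: ifP => // h.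
rewrite gbin_neg ?mulr0 //; lia.
Qed.

Definition u (n l : nat) : {poly int} :=
  (-1) ^+ (n + l) * 'X^(k * l) * (gbin (n%:Z - (k * l)%:Z) (n.+1%:Z - l%:Z))%:P.

Lemma term_eq n N l : (n.+1 < N)%N ->
  \sum_(j < N) (-1) ^+ (n.+1 + j) * aB n j *
     ((-1) ^+ (j + l) * 'X^(k * l) * (gbin (dd l) (j%:Z - l%:Z))%:P)
  = u n l.+1 - u n l.
Proof.
move=> hN.
transitivity (\sum_(j < N) (-1) ^+ (n.+1 + l) * 'X^(k * l) *
   ('X^k * (gbin (n%:Z - k%:Z + 1 + r%:Z) (n%:Z - j%:Z) * gbin (dd l) (j%:Z - l%:Z))%:P
    + (gbin (n%:Z + 1 + r%:Z) (n%:Z - j%:Z + 1) * gbin (dd l) (j%:Z - l%:Z))%:P)).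
  apply: eq_bigr => j _; rewrite /aB !polyCM -(sgnE n.+1 j l); ring.
rewrite -mulr_sumr big_split /= -mulr_sumr -!raddf_sum /=.
have e1 : \sum_(i < N) gbin (n%:Z - k%:Z + 1 + r%:Z) (n%:Z - (nat_of_ord i)%:Z) * gbin (dd l) ((nat_of_ord i)%:Z - l%:Z)
   = gbin (n%:Z - (k * l.+1)%:Z) (n%:Z - l%:Z).
  have := vdm_Sv (n%:Z - k%:Z + 1 + r%:Z) (dd l) l N n%:Z (_ : n%:Z < N%:Z); rewrite /Sv => ->; last lia.
  congr gbin; rewrite /dd mulnS PoszD; ring.
have e2 : \sum_(i < N) gbin (n%:Z + 1 + r%:Z) (n%:Z - (nat_of_ord i)%:Z + 1) * gbin (dd l) ((nat_of_ord i)%:Z - l%:Z)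
   = gbin (n%:Z - (k * l)%:Z) (n.+1%:Z - l%:Z).
  have hT : n.+1%:Z < N%:Z by lia.
  have := vdm_Sv (n%:Z + 1 + r%:Z) (dd l) l N n.+1%:Z hT.
  rewrite /Sv => h.
  have -> : n%:Z - (k * l)%:Z = n%:Z + 1 + r%:Z + dd l by rewrite /dd; ring.
  rewrite -h; apply: eq_bigr => i _; congr (gbin _ _ * _).
  rewrite -addn1 PoszD; ring.
rewrite e1 e2 /u.
have -> : n.+1%:Z - l.+1%:Z = n%:Z - l%:Z by lia.
rewrite addnS !addSn exprS mulnS.
have -> : 'X^(k + k * l) = 'X^k * 'X^(k * l) :> {poly int} by rewrite exprD.
ring.
Qed.

Lemma sgn_sub {R : pzRingType} (n j : nat) : (j <= n)%N ->
  (-1) ^+ (n.+1 + j) = - (-1) ^+ (n - j) :> R.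
Proof.
move=> h; rewrite addSn exprS mulN1r; congr (- _).
rewrite -[LHS]signr_odd -[RHS]signr_odd oddD oddB //.
Qed.

Lemma D_rec n : D n.+1 = \sum_(j < n.+1) (-1) ^+ (n - j) * aB n j * D j.
Proof.
have Z : \sum_(j < n.+2) (-1) ^+ (n.+1 + j) * aB n j * D j = 0.
  transitivity (\sum_(j < n.+2) \sum_(l < n.+2) (-1) ^+ (n.+1 + j) * aB n j *
     ((-1) ^+ (j + l) * 'X^(k * l) * (gbin (dd l) (j%:Z - l%:Z))%:P)).
    apply: eq_bigr => j _; rewrite (@D_widen _ _ (ltn_ord j)) mulr_sumr //.
  rewrite exchange_big /=.
  transitivity (\sum_(l < n.+2) (u n l.+1 - u n l)).
    by apply: eq_bigr => l _; rewrite term_eq.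
  rewrite -(big_mkord xpredT (fun l => u n l.+1 - u n l)) telescope_sumr //.
  rewrite /u (@gbin_neg _ (n.+1%:Z - n.+2%:Z)); last lia.
  rewrite muln0 subr0 gbinE /= bin_small ?polyC0 ?mulr0 ?subrr //; lia.
move: Z; rewrite big_ord_recr /= aB1 mulr1.
rewrite sign_even mul1r => /eqP; rewrite addrC addr_eq0 => /eqP ->.
rewrite -sumrN; apply: eq_bigr => j _.
by rewrite (@sgn_sub _ n j (ltn_ord j)) !mulNr opprK.
Qed.
End Main.


Section Fibo.
Variable k : nat.
Hypothesis hk : (1 <= k)%N.

Lemma Fib_aux_fuel f1 f2 n : (n < f1)%N -> (n < f2)%N -> Fib_aux k f1 n = Fib_aux k f2 n.
Proof.
elim: f1 f2 n => [|f1 IH] [|f2] n //= h1 h2.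
case: ifP => // /negbT; rewrite -leqNgt => hn.
by congr (_ * _ + _); apply: IH; lia.
Qed.

Lemma Fib_rec n : Fib k n = if (n < k)%N then 'X^n else 'X * Fib k n.-1 + Fib k (n - k).
Proof.
rewrite /Fib [in LHS]/=; case: ifP => // /negbT; rewrite -leqNgt => hn.
by congr (_ * _ + _); apply: Fib_aux_fuel; lia.
Qed.

Definition T (m l : nat) : {poly int} := ('C(m - (k - 1) * l, l))%:R * 'X^(m - k * l).

Lemma T0 m l : (m < k * l)%N -> T m l = 0.
Proof. by move=> h; rewrite /T bin_small ?mul0r //; nia. Qed.

Lemma T_rec m l : (k <= m)%N ->
  T m l = 'X * T m.-1 l + (match l with 0 => 0 | l'.+1 => T (m - k)%N l' end).
Proof.
move=> hm; case: l => [|l].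
  rewrite /T !muln0 !subn0 !bin0 !mul1r addr0 -exprS prednK //; lia.
case: (ltnP m (k * l.+1)) => h.
  rewrite !T0 ?mulr0 ?addr0 //; nia.
have [A hA] : exists A, (m - (k - 1) * l.+1 = A.+1)%N by exists (m - (k - 1) * l.+1).-1; nia.
have hA1 : (m.-1 - (k - 1) * l.+1 = A)%N by nia.
have hA2 : (m - k - (k - 1) * l = A)%N by nia.
rewrite /T hA hA1 hA2.
case: (ltnP (k * l.+1) m) => h2.
  have [e he] : exists e, (m - k * l.+1 = e.+1)%N by exists (m - k * l.+1).-1; nia.
  have he1 : (m.-1 - k * l.+1 = e)%N by nia.
  have he2 : (m - k - k * l = e.+1)%N by nia.
  rewrite he he1 he2 binS natrD exprS; ring.
have eA : A = l by nia.
have e0 : (m - k * l.+1 = 0)%N by nia.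
have e1 : (m.-1 - k * l.+1 = 0)%N by nia.
have e2 : (m - k - k * l = 0)%N by nia.
rewrite e0 e1 e2 eA binn bin_small // mul0r mulr0 add0r.
by rewrite binn.
Qed.

Lemma E_any m N : (m < k * N)%N -> Fib k m = \sum_(l < N) T m l.
Proof.
elim/ltn_ind: m N => m IH N hN.
have gen : forall N1 N2, (m < k * N1)%N -> (m < k * N2)%N ->
    \sum_(l < N1) T m l = \sum_(l < N2) T m l.
  suff w : forall N1 N2, (N1 <= N2)%N -> (m < k * N1)%N ->
      \sum_(l < N1) T m l = \sum_(l < N2) T m l.
    move=> N1 N2 h1 h2; case: (leqP N1 N2) => h; first exact: w.
    by rewrite (w N2 N1) // ltnW.
  move=> N1 N2 h12 h1; rewrite (big_ord_widen N2 (T m)) // big_mkcond.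
  apply: eq_bigr => l _; case: ifP => // hl; rewrite T0 //.
  have : (N1 <= l)%N by lia.
  move=> hl'; apply: (leq_trans h1); exact: leq_mul.
rewrite Fib_rec; case: ifP => hm.
  rewrite (gen N 1) //; last lia.
  rewrite big_ord1 /T /= bin0 mul1r. by rewrite muln0 subn0.
move/negbT: hm; rewrite -leqNgt => hm.
rewrite (gen N m.+1) //; last nia.
rewrite (IH m.-1 _ m.+1); [|lia|nia].
rewrite (IH (m - k)%N _ m); [|lia|nia].
transitivity (\sum_(l < m.+1) ('X * T m.-1 l +
   (match nat_of_ord l with 0 => 0 | l'.+1 => T (m - k)%N l' end))).
  rewrite big_split /= -mulr_sumr; congr (_ + _); rewrite [RHS]big_ord_recl /= add0r.
  by apply: eq_bigr => l _.
by apply: eq_bigr => l _; rewrite -T_rec.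
Qed.
End Fibo.


Lemma detB k r n : \det (Bmat k r n) = D k r n.
Proof.
suff : forall j, (j <= n)%N -> \det (@Mf _ (aB k r) j) = D k r j by apply.
elim: n => [|n IH] j hj.
  have -> : j = 0%N by lia.
  by rewrite det_mx00 /D big_ord1 /= addn0 expr0 muln0 expr0 mul1r big_ord0 divz1 mul1r.
case: (leqP j n) => h; first exact: IH.
have -> : j = n.+1 by lia.
rewrite (@hess _ _ (aB0 k r) (aB1 k r)) D_rec; apply: eq_bigr => i _.
by rewrite IH // -ltnS.
Qed.

Lemma D_nat k r n :
  D k r n = \sum_(l < n.+1) 'X^(k * l) * ('C(r + k * l + (n - l), n - l))%:R.
Proof.
apply: eq_bigr => l _.
have hl : (l <= n)%N by rewrite -ltnS.
have -> : dd k r l = Negz (r + k * l) by rewrite NegzE /dd; lia.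
have -> : n%:Z - l%:Z = Posz (n - l) by lia.
rewrite gbinE /= polyCM rmorphXn rmorphN1 -natz rmorph_nat.
have -> : (-1) ^+ (n + l) = (-1) ^+ (n - l) :> {poly int}.
  rewrite -[LHS]signr_odd -[RHS]signr_odd oddD oddB //.
have e : (-1) ^+ (n - l) * (-1) ^+ (n - l) = 1 :> {poly int} by rewrite -expr2 sqrr_sign.
transitivity ((-1) ^+ (n - l) * (-1) ^+ (n - l) * 'X^(k * l) * ('C(r + k * l + (n - l), n - l))%:R : {poly int}); first ring.
by rewrite e mul1r.
Qed.

Theorem theorem2 (k r n : nat) (hk : (1 <= k)%N) (hr : (r < k)%N) (hn : (1 <= n)%N) :
  'X^r * \det (Bmat k r n) = Fib k (k * n + r).
Proof.
rewrite detB D_nat (@E_any k hk _ n.+1); last nia.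
rewrite -(big_mkord xpredT (T k (k * n + r))) big_rev_mkord subn0 mulr_sumr.
apply: eq_bigr => l _.
have hl : (l <= n)%N by rewrite -ltnS.
rewrite /T subSS.
have -> : (k * n + r - (k - 1) * (n - l) = r + k * l + (n - l))%N by nia.
have -> : (k * n + r - k * (n - l) = r + k * l)%N by nia.
rewrite exprD; ring.
Qed.
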